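(* Let $\lambda$ be a regular uncountable cardinal, let $\mathcal{C}=\langle\mathcal{C}_\alpha\mid\alpha<\lambda\rangle$ be a coherent sequence of length $\lambda$ in which every $\mathcal{C}_\alpha$ is finite, and let $S\subseteq\lambda$ be stationary. Suppose there is a club $F\subseteq\lambda$ such that for every $\alpha\in S\cap\mathrm{acc}(F)$, $F\cap\alpha\subseteq\bigcup\mathcal{C}_\alpha$. Then $\mathcal{C}$ has a thread.
   Context: For a set of ordinals $A$, $\mathrm{acc}(A)$ is the set of $\beta<\sup\{\alpha+1\mid\alpha\in A\}$ with $\beta=\sup(A\cap\beta)$. A coherent sequence of length $\lambda$ is $\mathcal{C}=\langle\mathcal{C}_\alpha\mid\alpha<\lambda\rangle$ where each $\mathcal{C}_\alpha$ is a nonempty set of closed unbounded subsets of $\alpha$ (for successor $\alpha=\beta+1$, $\mathcal{C}_\alpha=\{\{\beta\}\}$), such that for all $\beta<\lambda$, $C\in\mathcal{C}_\beta$ and $\alpha\in\mathrm{acc}(C)$, $C\cap\alpha\in\mathcal{C}_\alpha$. A thread through $\mathcal{C}$ is a club $D\subseteq\lambda$ with $D\cap\alpha\in\mathcal{C}_\alpha$ for all $\alpha\in\mathrm{acc}(D)$. *)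

(* Defs.v *)
(* The cardinal lambda is represented as a well-ordered type
   (T, lt): the ordinals below lambda are exactly the elements of T.
   Sets of ordinals are predicates T -> Prop; sets of such sets are
   predicates (T -> Prop) -> Prop, with membership taken up to extensional
   equality of the member sets. *)
From Stdlib Require Import List.

Section Defs.
Context {T : Type} (lt : T -> T -> Prop).

Definition le (x y : T) : Prop := lt x y \/ x = y.

Definition strict_well_order : Prop :=
  (forall x, ~ lt x x) /\
  (forall x y z, lt x y -> lt y z -> lt x z) /\
  (forall x y, lt x y \/ x = y \/ lt y x) /\
  well_founded lt.

Definition regular_uncountable_cardinal : Prop :=
  strict_well_order /\
  (* a cardinal: every proper initial segment has smaller cardinality *)
  (forall a : T, ~ exists f : T -> {x : T | lt x a},
        forall u v, f u = f v -> u = v) /\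
  (* regular: every unbounded subset has full cardinality *)
  (forall X : T -> Prop, (forall a, exists x, X x /\ le a x) ->
        exists f : T -> {x : T | X x}, forall u v, f u = f v -> u = v) /\
  (~ exists f : T -> nat, forall u v, f u = f v -> u = v).

(* b = sup X  (least upper bound; sup of the empty set is the least ordinal) *)
Definition is_sup (X : T -> Prop) (b : T) : Prop :=
  (forall x, X x -> le x b) /\
  (forall g, (forall x, X x -> le x g) -> le b g).

Definition cap_below (A : T -> Prop) (b : T) : T -> Prop :=
  fun x => A x /\ lt x b.

(* acc(A) = { β < sup{α+1 | α ∈ A} | β = sup(A ∩ β) };
   β < sup{α+1 | α ∈ A}  iff  β <= α for some α ∈ A *)
Definition acc (A : T -> Prop) (b : T) : Prop :=
  (exists a, A a /\ le b a) /\ is_sup (cap_below A b) b.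

(* closed unbounded subsets of a domain [dom] (an initial segment: either
   {x | x < α} for an ordinal α < λ, or all of T = λ) *)
Definition closed_in (dom : T -> Prop) (A : T -> Prop) : Prop :=
  forall b, dom b -> (exists x, cap_below A b x) ->
    is_sup (cap_below A b) b -> A b.

Definition unbounded_in (dom : T -> Prop) (A : T -> Prop) : Prop :=
  forall g, dom g -> exists d, A d /\ dom d /\ le g d.

Definition club_in (dom : T -> Prop) (A : T -> Prop) : Prop :=
  (forall x, A x -> dom x) /\ closed_in dom A /\ unbounded_in dom A.

Definition below (a : T) : T -> Prop := fun x => lt x a.

Definition club (A : T -> Prop) : Prop := club_in (fun _ => True) A.

Definition stationary (S : T -> Prop) : Prop :=
  forall D, club D -> exists x, S x /\ D x.

Definition is_succ (b a : T) : Prop :=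
  lt b a /\ forall g, lt b g -> le a g.

Definition ext_eq (A B : T -> Prop) : Prop := forall x, A x <-> B x.

Definition mem_fam (F : (T -> Prop) -> Prop) (A : T -> Prop) : Prop :=
  exists E, F E /\ ext_eq E A.

Definition finite_fam (F : (T -> Prop) -> Prop) : Prop :=
  exists l : list (T -> Prop), forall E, F E -> exists E', In E' l /\ ext_eq E E'.

Definition big_union (F : (T -> Prop) -> Prop) : T -> Prop :=
  fun x => exists E, F E /\ E x.

Definition coherent_seq (C : T -> (T -> Prop) -> Prop) : Prop :=
  (forall a, exists E, C a E) /\
  (forall a E, C a E -> club_in (below a) E) /\
  (forall b a, is_succ b a -> forall E, C a E -> ext_eq E (fun x => x = b)) /\
  (forall b E, C b E -> forall a, acc E a -> mem_fam (C a) (cap_below E a)).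

Definition thread (C : T -> (T -> Prop) -> Prop) (D : T -> Prop) : Prop :=
  club D /\ forall a, acc D a -> mem_fam (C a) (cap_below D a).

End Defs.

(* Main.v *)
From Stdlib Require Import Classical ClassicalEpsilon ProofIrrelevance List Arith Lia.
Require Import Defs.
From mathcomp Require classical.filter classical.classical_sets.
Lemma ultra_ex (T:Type) (x0 : T) (Z : T -> Prop) (R : T -> T -> Prop)
 (Hdir : forall g h, exists k, forall a, R k a -> R g a /\ R h a)
 (Hne : forall g, exists a, Z a /\ R g a) :
 exists U : (T -> Prop) -> Prop,
  (forall g, U (fun a => Z a /\ R g a)) /\
  (forall A B : T -> Prop, U A -> (forall x, A x -> B x) -> U B) /\
  (forall A B : T -> Prop, U A -> U B -> U (fun x => A x /\ B x)) /\
  (forall A, U A -> exists x, A x) /\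
  (forall A : T -> Prop, U A \/ U (fun x => ~ A x)).
Proof.
  set (F0 := fun A : T -> Prop => exists g, forall a, Z a -> R g a -> A a).
  assert (PF : filter.ProperFilter F0).
  { constructor.
    - intros [g Hg]. destruct (Hne g) as [a [Za Ra]]. exact (Hg a Za Ra).
    - constructor.
      + exists x0. intros; exact I.
      + intros A B [g Hg] [h Hh]. destruct (Hdir g h) as [k Hk].
        exists k. intros a Za Ra. destruct (Hk a Ra). split; auto.
      + intros P Q PQ [g Hg]. exists g. intros a Za Ra. apply PQ. auto. }
  destruct (filter.ultraFilterLemma PF) as [U [HU sub]].
  exists U.
  assert (FU : filter.Filter U) by (apply filter.filter_filter).
  assert (SU : forall A B : T -> Prop, U A -> (forall x, A x -> B x) -> U B).
  { intros A B HA AB. eapply filter.filterS; [exact AB|exact HA]. }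
  split; [|split; [exact SU|split; [|split]]].
  - intros g. apply sub. exists g. intros a Za Ra. split; auto.
  - intros A B HA HB. eapply filter.filterI; [exact HA|exact HB].
  - intros A HA. apply NNPP. intros Hn.
    apply (filter.filter_not_empty U). apply (SU A); auto.
    intros x Ax. apply Hn. exists x. exact Ax.
  - intros A. exact (filter.in_ultra_setVsetC A HU).
Qed.
Section Ord.
Variables (T : Type) (lt : T -> T -> Prop).
Hypothesis Hirr : forall x, ~ lt x x.
Hypothesis Htr : forall x y z, lt x y -> lt y z -> lt x z.
Hypothesis Htri : forall x y, lt x y \/ x = y \/ lt y x.
Hypothesis Hwf : well_founded lt.

Notation le := (le lt).

Lemma le_refl x : le x x.
Proof. right; reflexivity. Qed.

Lemma le_lt_tr x y z : le x y -> lt y z -> lt x z.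
Proof. intros [H|H] H2; [eauto|subst; auto]. Qed.

Lemma lt_le_tr x y z : lt x y -> le y z -> lt x z.
Proof. intros H [H2|H2]; [eauto|subst; auto]. Qed.

Lemma le_tr x y z : le x y -> le y z -> le x z.
Proof. intros [H|H] H2; [left; eapply lt_le_tr; eauto|subst; auto]. Qed.

Lemma not_lt_le x y : ~ lt x y -> le y x.
Proof. intros H. destruct (Htri x y) as [h|[h|h]]; [tauto|right; auto|left; auto]. Qed.

Lemma not_le_lt x y : ~ le x y -> lt y x.
Proof. intros H. destruct (Htri x y) as [h|[h|h]]; [exfalso; apply H; left; auto|exfalso; apply H; right; auto|auto]. Qed.

Lemma le_lt_False x y : le x y -> lt y x -> False.
Proof. intros H1 H2. apply (Hirr x). eapply le_lt_tr; eauto. Qed.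

Lemma minimal_ex (P : T -> Prop) : (exists x, P x) -> exists m, P m /\ forall y, P y -> ~ lt y m.
Proof.
  intros [x Px]. revert Px. induction x as [x IH] using (well_founded_ind Hwf).
  intros Px. destruct (classic (exists y, P y /\ lt y x)) as [[y [Py Ly]]|N].
  - exact (IH y Ly Py).
  - exists x. split; auto. intros y Py Ly. apply N; eauto.
Qed.

Lemma sup_exists (X : T -> Prop) b : (forall x, X x -> le x b) -> exists s, is_sup lt X s.
Proof.
  intros Hb. destruct (minimal_ex (fun u => forall x, X x -> le x u)) as [m [Hm Hmin]].
  { exists b; auto. }
  exists m. split; auto. intros g Hg. apply not_lt_le. intros L. exact (Hmin g Hg L).
Qed.

Lemma max_ex g h : exists k, le g k /\ le h k.
Proof.
  destruct (Htri g h) as [H|[H|H]].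
  - exists h; split; [left; auto|apply le_refl].
  - subst; exists h; split; apply le_refl.
  - exists g; split; [apply le_refl|left; auto].
Qed.

Lemma ext_sym (A B : T -> Prop) : ext_eq A B -> ext_eq B A.
Proof. intros H x; split; apply H. Qed.
Lemma ext_tr (A B D : T -> Prop) : ext_eq A B -> ext_eq B D -> ext_eq A D.
Proof. intros H1 H2 x; split; intros; [apply H2, H1|apply H1, H2]; auto. Qed.
Lemma cap_ext (A B : T -> Prop) a : ext_eq A B -> ext_eq (cap_below lt A a) (cap_below lt B a).
Proof. intros H x; unfold cap_below; split; intros [h1 h2]; split; auto; apply H; auto. Qed.
Lemma sup_ext (A B : T -> Prop) s : ext_eq A B -> is_sup lt A s -> is_sup lt B s.
Proof.
  intros H [H1 H2]; split.
  - intros x Bx; apply H1, H, Bx.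
  - intros g Hg; apply H2; intros x Ax; apply Hg, H, Ax.
Qed.
Lemma acc_ext (A B : T -> Prop) a : ext_eq A B -> acc lt A a -> acc lt B a.
Proof.
  intros H [[x [Ax Lx]] Hs]; split.
  - exists x; split; auto; apply H; auto.
  - eapply sup_ext; [apply cap_ext; exact H|exact Hs].
Qed.
Lemma mem_ext (G : (T -> Prop) -> Prop) A B : mem_fam G A -> ext_eq A B -> mem_fam G B.
Proof. intros [E [GE HE]] H; exists E; split; auto; eapply ext_tr; eauto. Qed.


Hypothesis Hreg : forall X : T -> Prop, (forall a, exists x, X x /\ le a x) ->
        exists f : T -> {x : T | X x}, forall u v, f u = f v -> u = v.
Hypothesis Hunc : ~ exists f : T -> nat, forall u v, f u = f v -> u = v.

Lemma count_bounded (f : nat -> T) : exists B, forall n, le (f n) B.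
Proof.
  apply NNPP; intros N.
  assert (Hu : forall a, exists x, (fun x => exists n, f n = x) x /\ le a x).
  { intros a. apply NNPP; intros N2. apply N. exists a. intros n.
    destruct (classic (le a (f n))) as [h|h].
    - exfalso; apply N2; exists (f n); split; eauto.
    - left. apply not_le_lt; auto. }
  destruct (Hreg _ Hu) as [h Hh]. apply Hunc.
  exists (fun t => proj1_sig (constructive_indefinite_description _ (proj2_sig (h t)))).
  intros u v E.
  apply Hh.
  destruct (constructive_indefinite_description _ (proj2_sig (h u))) as [nu Hnu].
  destruct (constructive_indefinite_description _ (proj2_sig (h v))) as [nv Hnv].
  simpl in E. subst nv. rewrite Hnu in Hnv.
  destruct (h u) as [xu pu], (h v) as [xv pv]. simpl in *. subst xv.
  try (f_equal; apply proof_irrelevance).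
Qed.

Lemma no_max g : exists x, lt g x.
Proof.
  apply NNPP; intros N.
  assert (Hu : forall a, exists x, (fun x => x = g) x /\ le a x).
  { intros a. exists g; split; auto. apply not_lt_le. intros L; apply N; eauto. }
  destruct (Hreg _ Hu) as [h Hh]. apply Hunc. exists (fun _ => 0).
  intros u v _. apply Hh. destruct (h u) as [xu pu], (h v) as [xv pv]. subst.
  try (f_equal; apply proof_irrelevance).
Qed.

Lemma club_strict (F : T -> Prop) : club lt F -> forall g, exists x, F x /\ lt g x.
Proof.
  intros [_ [_ Hu]] g. destruct (no_max g) as [g' L].
  destruct (Hu g' I) as [d [Fd [_ Ld]]]. exists d; split; auto. eapply lt_le_tr; eauto.
Qed.

Lemma acc_club (F : T -> Prop) g : club lt F -> club lt (fun x => acc lt F x /\ lt g x).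
Proof.
  intros HF. split; [intros; exact I|split].
  - intros b _ [x [[Ax Lx] Lxb]] [Hs1 Hs2]. split; [|eauto].
    split.
    + destruct (club_strict F HF b) as [a [Fa La]]. exists a; split; auto. left; auto.
    + split.
      * intros y [_ Ly]. left; auto.
      * intros u Hu. apply Hs2. intros z [[Az Lz] Lzb].
        destruct Az as [_ [_ Hz2]]. apply Hz2. intros y [Fy Ly]. apply Hu. split; eauto.
  - intros g' _.
    destruct (max_ex g g') as [g0 [L1 L2]].
    destruct (choice _ (club_strict F HF)) as [hF HhF].
    set (f := fix f n := match n with 0 => hF g0 | S n => hF (f n) end).
    destruct (count_bounded f) as [B HB].
    destruct (sup_exists (fun x => exists n, f n = x) B) as [s [Hs1 Hs2]].
    { intros x [n <-]; auto. }
    assert (Hf : forall n, lt (f n) s).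
    { intros n. apply lt_le_tr with (f (S n)); [apply HhF|apply Hs1; eauto]. }
    assert (Hf0 : lt g0 s). { apply lt_le_tr with (f 0); [apply HhF|apply Hs1; eauto]. }
    exists s. split; [split|split; [exact I|]].
    + split.
      * destruct (club_strict F HF s) as [a [Fa La]]. exists a; split; auto. left; auto.
      * split.
        -- intros y [_ Ly]; left; auto.
        -- intros u Hu. apply Hs2. intros x [n <-]. apply Hu. split; auto.
           destruct n; apply HhF.
    + eapply le_lt_tr; eauto.
    + left. eapply le_lt_tr; eauto.
Qed.


Variables (C : T -> (T -> Prop) -> Prop) (S F : T -> Prop).
Hypothesis Hclub : forall a E, C a E -> club_in lt (below lt a) E.
Hypothesis Hco : forall b E, C b E -> forall a, acc lt E a -> mem_fam (C a) (cap_below lt E a).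
Hypothesis Hfin : forall a, finite_fam (C a).
Hypothesis Hstat : stationary lt S.
Hypothesis HF : club lt F.
Hypothesis Hcov : forall a, S a -> acc lt F a ->
     forall x, cap_below lt F a x -> big_union (C a) x.

Lemma inhab : exists x0 : T, True.
Proof.
  destruct (Hstat (fun _ => True)) as [x _].
  - split; [intros; exact I|split; [intros b; intros; exact I|]].
    intros g _; exists g; split; [exact I|split; [exact I|apply le_refl]].
  - exists x; exact I.
Qed.

Lemma S_unb g : exists a, S a /\ acc lt F a /\ lt g a.
Proof.
  destruct (Hstat _ (acc_club F g HF)) as [a [Sa [Aa La]]]. eauto.
Qed.

Lemma acc_dense a g : acc lt F a -> lt g a -> exists x, F x /\ le g x /\ lt x a.
Proof.
  intros [_ [_ Hs]] L. apply NNPP; intros N. apply (le_lt_False a g); auto.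
  apply Hs. intros x [Fx Lx]. destruct (classic (le g x)) as [h|h].
  - exfalso; apply N; eauto.
  - left; apply not_le_lt; auto.
Qed.

Lemma acc_dense_strict a g : acc lt F a -> lt g a -> exists x, F x /\ lt g x /\ lt x a.
Proof.
  intros [_ [_ Hs]] L. apply NNPP; intros N. apply (le_lt_False a g); auto.
  apply Hs. intros x [Fx Lx]. destruct (classic (lt g x)) as [h|h].
  - exfalso; apply N; eauto.
  - apply not_lt_le; auto.
Qed.

Lemma PH (P : nat -> T -> Prop) a y (Hy : lt y a) : forall m,
  (forall g, lt g a -> exists x, le g x /\ lt x a /\ exists i, i < m /\ P i x) ->
  exists i, i < m /\ forall g, lt g a -> exists x, le g x /\ lt x a /\ P i x.
Proof.
  induction m as [|m IH]; intros H.
  - destruct (H y Hy) as [x [_ [_ [i [Hi _]]]]]. lia.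
  - destruct (classic (forall g, lt g a -> exists x, le g x /\ lt x a /\ P m x)) as [Hm|Hm].
    + exists m; split; [lia|auto].
    + apply not_all_ex_not in Hm. destruct Hm as [g0 Hg0].
      apply imply_to_and in Hg0. destruct Hg0 as [Lg0 Ng0].
      destruct IH as [i [Hi Hi2]].
      * intros g Lg.
        assert (Hk : exists k, le g k /\ le g0 k /\ lt k a).
        { destruct (Htri g g0) as [h|[h|h]].
          - exists g0; split; [left; auto|split; [apply le_refl|auto]].
          - subst; exists g0; split; [apply le_refl|split; [apply le_refl|auto]].
          - exists g; split; [apply le_refl|split; [left; auto|auto]]. }
        destruct Hk as [k [K1 [K2 Lk]]].
        destruct (H k Lk) as [x [Lx [Lxa [i [Hi Pi]]]]].
        exists x; split; [eapply le_tr; eauto|split; auto].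
        exists i; split; auto.
        assert (i <> m); [|lia].
        intros ->. apply Ng0. exists x; split; [eapply le_tr; eauto|auto].
      * exists i; split; [lia|auto].
Qed.


Variable L : T -> list (T -> Prop).
Hypothesis HL : forall a E, C a E -> exists E', In E' (L a) /\ ext_eq E E'.

Definition Sn n a := S a /\ acc lt F a /\ (exists y, lt y a) /\ length (L a) <= n.

Lemma width : exists n, forall g, exists a, Sn n a /\ lt g a.
Proof.
  apply NNPP; intros N.
  assert (Hb : forall n, exists g, forall a, Sn n a -> ~ lt g a).
  { intros n. apply NNPP; intros N2. apply N. exists n. intros g.
    apply NNPP; intros N3. apply N2. exists g. intros a Sa La. apply N3; eauto. }
  destruct (choice _ Hb) as [b Hbb].
  destruct (count_bounded b) as [B HB].
  destruct (S_unb B) as [a [Sa [Aa La]]].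
  apply (Hbb (length (L a)) a).
  - split; auto; split; auto; split; eauto.
  - eapply le_lt_tr; eauto.
Qed.

Definition e a i := nth i (L a) (fun _ => False).

Definition Y n a i j := fun a2 => Sn n a2 /\ lt a a2 /\ mem_fam (C a2) (e a2 i) /\
  acc lt (e a2 i) a /\ ext_eq (cap_below lt (e a2 i) a) (e a j).

Lemma inL a E : C a E -> exists j, j < length (L a) /\ ext_eq E (e a j).
Proof.
  intros H. destruct (HL a E H) as [E' [Hin Hex]].
  destruct (In_nth _ _ (fun _ => False) Hin) as [j [Hj Hn]].
  exists j; split; auto. unfold e; rewrite Hn; auto.
Qed.

Lemma K1 n a a2 : Sn n a -> Sn n a2 -> lt a a2 -> exists i j, i < n /\ j < n /\ Y n a i j a2.
Proof.
  intros Ha Ha2 L12. destruct Ha as [Sa [AFa [[y Ly] Lna]]].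
  destruct Ha2 as [Sa2 [AFa2 [y2 Lna2]]].
  destruct (PH (fun i x => i < length (L a2) /\ mem_fam (C a2) (e a2 i) /\ e a2 i x) a y Ly
             (length (L a2))) as [i0 [Hi0 Hu]].
  { intros g Lg. destruct (acc_dense a g AFa Lg) as [x [Fx [Lgx Lxa]]].
    exists x; split; auto; split; auto.
    destruct (Hcov a2 Sa2 AFa2 x) as [E [CE Ex]]. { split; eauto. }
    destruct (inL a2 E CE) as [i [Hi Hex]].
    exists i; split; auto; split; auto; split; [exists E; split; auto|apply Hex; auto]. }
  destruct (Hu y Ly) as [x0 [_ [_ [_ [Hmem _]]]]].
  destruct Hmem as [E0 [CE0 Hex0]].
  assert (Hacc : acc lt (e a2 i0) a).
  { split.
    - destruct (Hclub a2 E0 CE0) as [_ [_ Hub]].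
      destruct (Hub a L12) as [d [E0d [_ Ld]]]. exists d; split; auto. apply Hex0; auto.
    - split.
      + intros x [_ Lx]; left; auto.
      + intros u Hub. destruct (classic (le a u)) as [h|h]; auto.
        apply not_le_lt in h.
        destruct (acc_dense_strict a u AFa h) as [f [Ff [Luf Lfa]]].
        destruct (Hu f Lfa) as [x [Lfx [Lxa [_ [_ Ex]]]]].
        exfalso. apply (le_lt_False x u).
        * apply Hub; split; auto.
        * eapply lt_le_tr; eauto. }
  assert (Hacc0 : acc lt E0 a) by (eapply acc_ext; [apply ext_sym; exact Hex0|exact Hacc]).
  destruct (Hco a2 E0 CE0 a Hacc0) as [E1 [CE1 Hex1]].
  destruct (inL a E1 CE1) as [j [Hj Hexj]].
  exists i0, j. split; [lia|split; [lia|]].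
  split; [split; auto; split; eauto|split; auto; split; [exists E0; split; auto|split; auto]].
  eapply ext_tr; [apply cap_ext; apply ext_sym; exact Hex0|].
  eapply ext_tr; [apply ext_sym; exact Hex1|exact Hexj].
Qed.


Variable n : nat.
Variable U : (T -> Prop) -> Prop.
Hypothesis HU1 : forall g, U (fun a => Sn n a /\ lt g a).
Hypothesis HU2 : forall A B : T -> Prop, U A -> (forall x, A x -> B x) -> U B.
Hypothesis HU3 : forall A B : T -> Prop, U A -> U B -> U (fun x => A x /\ B x).
Hypothesis HU4 : forall A, U A -> exists x, A x.
Hypothesis HU5 : forall A : T -> Prop, U A \/ U (fun x => ~ A x).

Lemma Uunion : forall m (A : nat -> T -> Prop), U (fun x => exists k, k < m /\ A k x) ->
  exists k, k < m /\ U (A k).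
Proof.
  induction m as [|m IH]; intros A H.
  - destruct (HU4 _ H) as [x [k [Hk _]]]. lia.
  - destruct (HU5 (A m)) as [h|h].
    + exists m; split; auto.
    + destruct (IH A) as [k [Hk Hk2]].
      * eapply HU2; [apply (HU3 _ _ H h)|].
        intros x [[k [Hk Ak]] Nm]. exists k; split; auto.
        assert (k <> m) by (intros ->; auto). lia.
      * exists k; split; auto.
Qed.

Lemma K2 a : Sn n a -> exists i, i < n /\ exists j, j < n /\ U (Y n a i j).
Proof.
  intros Ha.
  destruct (Uunion n (fun i x => exists j, j < n /\ Y n a i j x)) as [i [Hi Hi2]].
  { eapply HU2; [apply (HU1 a)|]. intros x [Sx Lx].
    destruct (K1 n a x Ha Sx Lx) as [i [j [Hi [Hj HY]]]]. eauto. }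
  exists i; split; auto. apply (Uunion n (fun j x => Y n a i j x)). exact Hi2.
Qed.

Variable x0 : T.

Lemma K3 : exists i0, i0 < n /\ forall g, exists a, Sn n a /\ lt g a /\
   exists j, j < n /\ U (Y n a i0 j).
Proof.
  apply NNPP; intros N.
  assert (Hb : forall i, exists g, i < n -> forall a, Sn n a -> lt g a ->
     ~ exists j, j < n /\ U (Y n a i j)).
  { intros i. destruct (classic (i < n)) as [Hi|Hi]; [|exists x0; intros; lia].
    apply NNPP; intros N2. apply N. exists i; split; auto. intros g.
    apply NNPP; intros N3. apply N2. exists g. intros _ a Sa La Hj. apply N3; eauto. }
  destruct (choice _ Hb) as [b Hbb].
  destruct (count_bounded b) as [B HB].
  destruct (HU4 _ (HU1 B)) as [a [Sa La]].
  destruct (K2 a Sa) as [i [Hi Hj]].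
  apply (Hbb i Hi a Sa); auto. eapply le_lt_tr; eauto.
Qed.


Variable i0 : nat.
Hypothesis Hi0 : forall g, exists a, Sn n a /\ lt g a /\ exists j, j < n /\ U (Y n a i0 j).

Definition good a j := Sn n a /\ j < n /\ U (Y n a i0 j).
Definition D x := exists a j, good a j /\ e a j x.

Lemma good_mem a j : good a j -> exists E1, C a E1 /\ ext_eq E1 (e a j).
Proof.
  intros [_ [_ HY]]. destruct (HU4 _ HY) as [a2 [_ [_ [[E0 [CE0 Hex0]] [Hacc Hcap]]]]].
  assert (Hacc0 : acc lt E0 a) by (eapply acc_ext; [apply ext_sym; exact Hex0|exact Hacc]).
  destruct (Hco a2 E0 CE0 a Hacc0) as [E1 [CE1 Hex1]].
  exists E1; split; auto.
  eapply ext_tr; [exact Hex1|]. eapply ext_tr; [apply cap_ext; exact Hex0|exact Hcap].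
Qed.

Lemma good_sub a j x : good a j -> e a j x -> lt x a.
Proof.
  intros G Ex. destruct (good_mem a j G) as [E1 [CE1 Hex]].
  destruct (Hclub a E1 CE1) as [Hs _]. apply (Hs x). apply Hex; auto.
Qed.

Lemma good_common a j b k : good a j -> good b k -> exists a2,
  Y n a i0 j a2 /\ Y n b i0 k a2.
Proof.
  intros [_ [_ H1]] [_ [_ H2]]. destruct (HU4 _ (HU3 _ _ H1 H2)) as [a2 [Y1 Y2]]. eauto.
Qed.

Lemma good_coh a j b k : good a j -> good b k -> lt a b ->
  acc lt (e b k) a /\ ext_eq (cap_below lt (e b k) a) (e a j).
Proof.
  intros G1 G2 Lab. destruct (good_common a j b k G1 G2) as [a2 [Y1 Y2]].
  destruct Y1 as [_ [_ [_ [Acc1 Cap1]]]]. destruct Y2 as [_ [_ [_ [Acc2 Cap2]]]].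
  set (E2 := e a2 i0) in *.
  assert (Hcap : ext_eq (cap_below lt (e b k) a) (cap_below lt E2 a)).
  { intros x; split.
    - intros [Ex Lx]. apply Cap2 in Ex. destruct Ex; split; auto.
    - intros [Ex Lx]. split; auto. apply Cap2. split; eauto. }
  split.
  - split.
    + destruct Acc2 as [_ [_ Hs]].
      apply NNPP; intros N. apply (le_lt_False b a); auto.
      apply Hs. intros x [Ex Lx]. destruct (classic (le a x)) as [h|h].
      * exfalso; apply N. exists x; split; auto. apply Cap2; split; auto.
      * left; apply not_le_lt; auto.
    + destruct Acc1 as [_ Hs]. eapply sup_ext; [apply ext_sym; exact Hcap|exact Hs].
  - eapply ext_tr; [exact Hcap|exact Cap1].
Qed.

Lemma good_eq a j k : good a j -> good a k -> ext_eq (e a j) (e a k).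
Proof.
  intros G1 G2. destruct (good_common a j a k G1 G2) as [a2 [Y1 Y2]].
  destruct Y1 as [_ [_ [_ [_ Cap1]]]]. destruct Y2 as [_ [_ [_ [_ Cap2]]]].
  eapply ext_tr; [apply ext_sym; exact Cap1|exact Cap2].
Qed.

Lemma Dcap a j : good a j -> ext_eq (cap_below lt D a) (e a j).
Proof.
  intros G x; split.
  - intros [[b [k [Gb Ex]]] Lx].
    destruct (Htri a b) as [h|[h|h]].
    + apply (proj2 (good_coh a j b k G Gb h)). split; auto.
    + subst. apply (good_eq b k j Gb G); auto.
    + destruct (good_coh b k a j Gb G h) as [_ Hc]. apply Hc in Ex. destruct Ex; auto.
  - intros Ex. split; [exists a, j; auto|eapply good_sub; eauto].
Qed.

Lemma good_unb g : exists a j, good a j /\ lt g a.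
Proof.
  destruct (Hi0 g) as [a [Sa [La [j [Hj HY]]]]]. exists a, j. split; [split; auto|auto].
Qed.

Lemma main_thread : exists D, thread lt C D.
Proof.
  exists D. split.
  - split; [intros; exact I|split].
    + intros b _ Hne Hsup.
      destruct (good_unb b) as [a [j [G Lba]]].
      destruct (good_mem a j G) as [E1 [CE1 Hex]].
      assert (Hc : ext_eq (cap_below lt D b) (cap_below lt E1 b)).
      { intros x; split.
        - intros [Dx Lx]. split; auto. apply Hex. apply (Dcap a j G). split; eauto.
        - intros [Ex Lx]. split; auto. apply Hex in Ex. exists a, j; auto. }
      destruct (Hclub a E1 CE1) as [_ [Hcl _]].
      assert (E1b : E1 b).
      { apply Hcl; auto.
        - destruct Hne as [x Hx]. exists x. apply Hc; auto.
        - eapply sup_ext; [exact Hc|exact Hsup]. }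
      exists a, j; split; auto. apply Hex; auto.
    + intros g _. destruct (good_unb g) as [a [j [G Lga]]].
      destruct (good_mem a j G) as [E1 [CE1 Hex]].
      destruct (Hclub a E1 CE1) as [_ [_ Hub]].
      destruct (Hub g Lga) as [d [E1d [_ Lgd]]].
      exists d; split; [exists a, j; split; auto; apply Hex; auto|split; auto; exact I].
  - intros b [[x [Dx Lbx]] Hsup].
    destruct Dx as [a [j [G Ex]]].
    assert (Lba : lt b a) by (eapply le_lt_tr; [exact Lbx|eapply good_sub; eauto]).
    destruct (good_mem a j G) as [E1 [CE1 Hex]].
    assert (Hc : ext_eq (cap_below lt D b) (cap_below lt E1 b)).
    { intros y; split.
      - intros [Dy Ly]. split; auto. apply Hex. apply (Dcap a j G). split; eauto.
      - intros [Ey Ly]. split; auto. apply Hex in Ey. exists a, j; auto. }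
    assert (Hacc : acc lt E1 b).
    { split.
      - exists x; split; auto. apply Hex; auto.
      - eapply sup_ext; [exact Hc|exact Hsup]. }
    eapply mem_ext; [apply (Hco a E1 CE1 b Hacc)|apply ext_sym; exact Hc].
Qed.

End Ord.

Theorem lemma2p8 (T : Type) (lt : T -> T -> Prop)
  (C : T -> (T -> Prop) -> Prop) (S F : T -> Prop) :
  regular_uncountable_cardinal lt ->
  coherent_seq lt C ->
  (forall a, finite_fam (C a)) ->
  stationary lt S ->
  club lt F ->
  (forall a, S a -> acc lt F a ->
     forall x, cap_below lt F a x -> big_union (C a) x) ->
  exists D, thread lt C D.
Proof.
  intros [[Hirr [Htr [Htri Hwf]]] [_ [Hreg Hunc]]] [_ [Hclub [_ Hco]]] Hfin Hstat HF Hcov.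
  destruct (choice (fun a l => forall E, C a E -> exists E', In E' l /\ ext_eq E E') Hfin)
    as [L HL].
  destruct (inhab T lt S Hstat) as [x0 _].
  destruct (width T lt Htr Htri Hwf Hreg Hunc S F Hstat HF L) as [n Hn].
  destruct (ultra_ex T x0 (Sn T lt S F L n) lt) as [U [HU1 [HU2 [HU3 [HU4 HU5]]]]].
  { intros g h. destruct (Htri g h) as [H|[H|H]].
    - exists h. intros a Ha. split; eauto.
    - subst. exists h. auto.
    - exists g. intros a Ha. split; eauto. }
  { intros g. destruct (Hn g) as [a [Ha La]]. eauto. }
  edestruct (K3 T lt) as [i0 [Hi0n Hi0]]; eauto.
  eapply (main_thread T lt); eauto.
Qed.
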